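(* Let $c\ge1$ and define $f:\{0,1,2,\dots\}\to\mathbb{R}$ by $f(m)=(1-2^{-m})(c-m)$. Let $m^*$ be the largest integer $m$ at which $f$ attains its maximum. Then $\log_2 c-2<m^*\le\log_2 c+1$. *)

(* Defs.v *)
From Stdlib Require Import Reals.
Open Scope R_scope.

Definition f (c : R) (m : nat) : R := (1 - / 2 ^ m) * (c - INR m).

Definition log2 (x : R) : R := ln x / ln 2.

Definition is_largest_argmax (c : R) (m : nat) : Prop :=
  (forall k : nat, f c k <= f c m) /\
  (forall k : nat, f c k = f c m -> (k <= m)%nat).

(* Main.v *)
Require Import Defs.
From Stdlib Require Import Reals Lra Lia.
Open Scope R_scope.

Lemma fstep (c : R) (m : nat) :
  Defs.f c (S m) = Defs.f c m + (-1 + (c - INR m + 1) / 2 ^ (S m)).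
Proof.
  unfold Defs.f. rewrite S_INR. simpl.
  assert (H : 0 < 2 ^ m) by (apply pow_lt; lra).
  field. lra.
Qed.

Lemma inr_le_pow (m : nat) : INR m <= 2 ^ m.
Proof.
  induction m as [|m IH]; [simpl; lra|].
  rewrite S_INR; simpl. assert (1 <= 2 ^ m) by (apply pow_R1_Rle; lra). lra.
Qed.

Theorem lemma2 (c : R) (hc : 1 <= c) (mstar : nat)
  (hm : is_largest_argmax c mstar) :
  log2 c - 2 < INR mstar /\ INR mstar <= log2 c + 1.
Proof.
  destruct hm as [hmax hlarge].
  assert (ln2 : 0 < ln 2) by (rewrite <- ln_1; apply ln_increasing; lra).
  assert (hc0 : 0 < c) by lra.
  assert (Hlow : c < 2 ^ (mstar + 2)).
  { assert (Hlt : Defs.f c (S mstar) < Defs.f c mstar).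
    { destruct (Rle_lt_or_eq_dec _ _ (hmax (S mstar))) as [h|h]; auto.
      apply hlarge in h. lia. }
    rewrite fstep in Hlt.
    set (P := 2 ^ S mstar) in *.
    assert (HP : 0 < P) by (apply pow_lt; lra).
    set (q := (c - INR mstar + 1) / P) in *.
    assert (Hq : c - INR mstar + 1 = q * P) by (unfold q; field; lra).
    assert (Hx : c - INR mstar + 1 < P) by nra.
    rewrite pow_add. replace (2 ^ 2) with 4 by (simpl; lra).
    assert (P = 2 * 2 ^ mstar) by (unfold P; simpl; lra).
    pose proof (inr_le_pow mstar). lra. }
  assert (Hup : 2 ^ mstar <= 2 * c).
  { destruct mstar as [|k].
    - simpl. lra.
    - pose proof (hmax k) as Hk. rewrite fstep in Hk.
      set (P := 2 ^ S k) in *.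
      assert (HP : 0 < P) by (apply pow_lt; lra).
      set (q := (c - INR k + 1) / P) in *.
      assert (Hq : c - INR k + 1 = q * P) by (unfold q; field; lra).
      assert (Hx : P <= c - INR k + 1) by nra.
      pose proof (pos_INR k). lra. }
  unfold log2. split.
  - assert (ln c < ln (2 ^ (mstar + 2))) by (apply ln_increasing; lra).
    rewrite ln_pow in H by lra. rewrite plus_INR in H. simpl in H.
    apply Rlt_le_trans with ((INR mstar + 2) * ln 2 / ln 2 - 2).
    + unfold Rdiv. apply Rplus_lt_compat_r. apply Rmult_lt_compat_r.
      apply Rinv_0_lt_compat; lra. lra.
    + right. field. lra.
  - assert (ln (2 ^ mstar) <= ln (2 * c)).
    { destruct (Rle_lt_or_eq_dec _ _ Hup) as [h|h].
      - left. apply ln_increasing; [apply pow_lt; lra | lra].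
      - right. rewrite h. reflexivity. }
    rewrite ln_pow in H by lra. rewrite ln_mult in H by lra.
    apply Rle_trans with ((ln 2 + ln c) / ln 2).
    + apply Rmult_le_reg_r with (ln 2); auto.
      unfold Rdiv. rewrite Rmult_assoc, Rinv_l by lra. lra.
    + right. field. lra.
Qed.
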